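(* On the surface of the unit cube, the shortest geodesic trajectory between two vertices that are opposite on a face is the face diagonal, of length $\sqrt2$, and among all other geodesic trajectories between two such vertices the minimal length is $\sqrt{10}$.
   Context: A geodesic trajectory between two vertices is a locally length-minimizing (straight in the flat metric) path on the cube surface joining them whose interior contains no vertex. *)

(* Defs.v *)
From Stdlib Require Import Reals Lra Lia.
Open Scope R_scope.

Definition pt : Type := (R * R * R)%type.

Definition coord (p : pt) (i : nat) : R :=
  match i with
  | O => fst (fst p)
  | S O => snd (fst p)
  | _ => snd p
  end.

Definition vsub (p q : pt) : pt :=
  (fst (fst p) - fst (fst q), snd (fst p) - snd (fst q), snd p - snd q).
Definition vadd (p q : pt) : pt :=
  (fst (fst p) + fst (fst q), snd (fst p) + snd (fst q), snd p + snd q).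
Definition vscale (l : R) (p : pt) : pt :=
  (l * fst (fst p), l * snd (fst p), l * snd p).
Definition dot (p q : pt) : R :=
  fst (fst p) * fst (fst q) + snd (fst p) * snd (fst q) + snd p * snd q.
Definition norm (p : pt) : R := sqrt (dot p p).
Definition pdist (p q : pt) : R := norm (vsub q p).

Definition in_cube (p : pt) : Prop :=
  forall i, (i < 3)%nat -> 0 <= coord p i <= 1.

Definition is_vertex (p : pt) : Prop :=
  forall i, (i < 3)%nat -> coord p i = 0 \/ coord p i = 1.

Definition is_face (i : nat) (b : R) : Prop := (i < 3)%nat /\ (b = 0 \/ b = 1).
Definition in_face (i : nat) (b : R) (p : pt) : Prop := in_cube p /\ coord p i = b.

Definition opposite_on_face (A B : pt) : Prop :=
  is_vertex A /\ is_vertex B /\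
  exists i, (i < 3)%nat /\ coord A i = coord B i /\
    forall j, (j < 3)%nat -> j <> i -> coord A j <> coord B j.

Definition on_segment (A B p : pt) : Prop :=
  exists t, 0 <= t <= 1 /\ p = vadd A (vscale t (vsub B A)).

(** Straightness (in the flat metric of the cube surface) at a breakpoint
    [p] between an incoming segment [a,p] and an outgoing segment [p,c].
    Either both segments lie in a common face and continue in the same
    direction, or they lie in two distinct (hence adjacent) faces meeting
    along the edge through [p], and the unfolding across that edge makes them
    collinear: the unit directions have the same component along the edge
    (the perpendicular components then automatically match, and point
    towards / away from the edge). *)
Definition straight_at (a p c : pt) : Prop :=
  exists i b i' b',
    is_face i b /\ is_face i' b' /\
    in_face i b a /\ in_face i b p /\ in_face i' b' p /\ in_face i' b' c /\
    ( (i = i' /\ b = b' /\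
         exists l, 0 < l /\ vsub c p = vscale l (vsub p a))
      \/
      (i <> i' /\
         forall j, (j < 3)%nat -> j <> i -> j <> i' ->
           coord (vsub p a) j / norm (vsub p a)
           = coord (vsub c p) j / norm (vsub c p)) ).

Definition geodesic_traj (A B : pt) (n : nat) (p : nat -> pt) : Prop :=
  (1 <= n)%nat /\ p O = A /\ p n = B /\
  (forall k, (k < n)%nat ->
     p k <> p (S k) /\
     exists i b, is_face i b /\ in_face i b (p k) /\ in_face i b (p (S k))) /\
  (forall k, (0 < k < n)%nat -> ~ is_vertex (p k)) /\
  (forall k t, (k < n)%nat -> 0 < t < 1 ->
     ~ is_vertex (vadd (p k) (vscale t (vsub (p (S k)) (p k))))) /\
  (forall k, (0 < k < n)%nat -> straight_at (p (pred k)) (p k) (p (S k))).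

Fixpoint path_len (p : nat -> pt) (n : nat) : R :=
  match n with
  | O => 0
  | S m => path_len p m + pdist (p m) (p (S m))
  end.

(** The path is not (a reparametrization of) the face diagonal [A,B]. *)
Definition leaves_segment (A B : pt) (n : nat) (p : nat -> pt) : Prop :=
  exists k, (k <= n)%nat /\ ~ on_segment A B (p k).

(* Main.v *)
Require Import Defs.
From Stdlib Require Import Reals Lra Lia ZArith.
Open Scope R_scope.


Lemma coord_vsub p q m : coord (vsub p q) m = coord p m - coord q m.
Proof. destruct m as [|[|m]]; reflexivity. Qed.
Lemma coord_vadd p q m : coord (vadd p q) m = coord p m + coord q m.
Proof. destruct m as [|[|m]]; reflexivity. Qed.
Lemma coord_vscale l p m : coord (vscale l p) m = l * coord p m.
Proof. destruct m as [|[|m]]; reflexivity. Qed.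

Definition tri (i j k : nat) : Prop :=
  (i < 3 /\ j < 3 /\ k < 3 /\ i <> j /\ i <> k /\ j <> k)%nat.

Lemma tri_cover i j k m : tri i j k -> (m < 3)%nat -> m = i \/ m = j \/ m = k.
Proof. unfold tri; lia. Qed.

Lemma tri_perm1 i j k : tri i j k -> tri i k j. Proof. unfold tri; lia. Qed.
Lemma tri_perm2 i j k : tri i j k -> tri j i k. Proof. unfold tri; lia. Qed.
Lemma tri_perm3 i j k : tri i j k -> tri k j i. Proof. unfold tri; lia. Qed.

Lemma other2 i : (i < 3)%nat -> exists j k, tri i j k.
Proof.
  intros H. destruct i as [|[|[|i]]].
  - exists 1%nat, 2%nat; unfold tri; lia.
  - exists 0%nat, 2%nat; unfold tri; lia.
  - exists 0%nat, 1%nat; unfold tri; lia.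
  - lia.
Qed.

Lemma third i j : (i < 3)%nat -> (j < 3)%nat -> i <> j -> exists k, tri i j k.
Proof.
  intros. destruct i as [|[|[|i]]]; destruct j as [|[|[|j]]]; try lia;
  first [exists 0%nat; unfold tri; lia | exists 1%nat; unfold tri; lia | exists 2%nat; unfold tri; lia].
Qed.

Lemma dot_tri i j k x y : tri i j k ->
  dot x y = coord x i * coord y i + coord x j * coord y j + coord x k * coord y k.
Proof.
  intros [Hi [Hj [Hk [H1 [H2 H3]]]]].
  destruct x as [[x0 x1] x2]; destruct y as [[y0 y1] y2]; unfold dot; simpl.
  destruct i as [|[|[|i]]]; destruct j as [|[|[|j]]]; destruct k as [|[|[|k]]];
    try lia; simpl; ring.
Qed.

Lemma pt_ext x y : (forall m, (m < 3)%nat -> coord x m = coord y m) -> x = y.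
Proof.
  intros H. destruct x as [[x0 x1] x2]; destruct y as [[y0 y1] y2].
  pose proof (H 0%nat ltac:(lia)) as H0; pose proof (H 1%nat ltac:(lia)) as H1;
  pose proof (H 2%nat ltac:(lia)) as H2; simpl in *; subst; reflexivity.
Qed.

Lemma dot_nonneg x : 0 <= dot x x.
Proof. destruct x as [[a b] c]; unfold dot; simpl; nra. Qed.

Lemma norm_sq x : norm x * norm x = dot x x.
Proof. unfold norm; apply sqrt_sqrt, dot_nonneg. Qed.

Lemma norm_nonneg x : 0 <= norm x.
Proof. unfold norm; apply sqrt_pos. Qed.

Lemma norm_tri x y : norm (vadd x y) <= norm x + norm y.
Proof.
  pose proof (norm_sq x) as Hx. pose proof (norm_sq y) as Hy.
  pose proof (norm_sq (vadd x y)) as Hz.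
  pose proof (norm_nonneg x); pose proof (norm_nonneg y); pose proof (norm_nonneg (vadd x y)).
  destruct x as [[x0 x1] x2]; destruct y as [[y0 y1] y2]; unfold dot, vadd in *; simpl in *.
  set (a := norm ((x0, x1), x2)) in *. set (b := norm ((y0, y1), y2)) in *.
  set (c := norm ((x0 + y0, x1 + y1), x2 + y2)) in *.
  assert (HD : (x0*y0 + x1*y1 + x2*y2) <= a * b).
  { assert (Hl : (x0*y0 + x1*y1 + x2*y2)^2 <= (a*b)^2).
    { replace ((a*b)^2) with ((a*a)*(b*b)) by ring. rewrite Hx, Hy.
      assert (E : (x0 * x0 + x1 * x1 + x2 * x2) * (y0 * y0 + y1 * y1 + y2 * y2) -
        (x0*y0 + x1*y1 + x2*y2)^2 = (x0*y1-x1*y0)^2+(x0*y2-x2*y0)^2+(x1*y2-x2*y1)^2) by ring.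
      assert (0 <= (x0*y1-x1*y0)^2+(x0*y2-x2*y0)^2+(x1*y2-x2*y1)^2) by
        (repeat apply Rplus_le_le_0_compat; apply pow2_ge_0).
      lra. }
    assert (0 <= a*b) by (apply Rmult_le_pos; auto).
    destruct (Rle_dec (x0*y0 + x1*y1 + x2*y2) 0); [lra|].
    apply Rsqr_incr_0_var; unfold Rsqr; nra. }
  apply Rsqr_incr_0_var; [|lra]. unfold Rsqr.
  assert (E : c * c = a*a + b*b + 2*(x0*y0 + x1*y1 + x2*y2)) by (rewrite Hz, Hx, Hy; ring).
  nra.
Qed.

Lemma pdist_tri a b c : pdist a c <= pdist a b + pdist b c.
Proof.
  unfold pdist. replace (vsub c a) with (vadd (vsub b a) (vsub c b)).
  apply norm_tri.
  apply pt_ext; intros m _. rewrite coord_vadd, !coord_vsub; ring.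
Qed.

Lemma sum3_sq0 a b c : a*a + b*b + c*c = 0 -> a = 0 /\ b = 0 /\ c = 0.
Proof.
  intros H. pose proof (Rle_0_sqr a); pose proof (Rle_0_sqr b); pose proof (Rle_0_sqr c).
  unfold Rsqr in *.
  assert (a*a = 0) by lra. assert (b*b = 0) by lra. assert (c*c = 0) by lra.
  repeat split; apply Rsqr_0_uniq; unfold Rsqr; auto.
Qed.

Lemma norm_zero_eq x y : norm (vsub y x) = 0 -> x = y.
Proof.
  intros H. pose proof (norm_sq (vsub y x)) as Hs. rewrite H in Hs.
  apply pt_ext. intros m Hm.
  destruct x as [[x0 x1] x2]; destruct y as [[y0 y1] y2]; unfold dot, vsub in Hs; simpl in Hs.
  symmetry in Hs. rewrite Rmult_0_l in Hs. apply sum3_sq0 in Hs.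
  destruct m as [|[|[|m]]]; simpl; try lia; lra.
Qed.

Lemma norm_pos_neq x y : x <> y -> 0 < norm (vsub y x).
Proof.
  intros H. destruct (norm_nonneg (vsub y x)) as [h|h]; auto.
  exfalso; apply H, norm_zero_eq; auto.
Qed.

Lemma tri_eq x y : norm x + norm y <= norm (vadd x y) ->
  forall m, coord x m * norm (vadd x y) = norm x * coord (vadd x y) m.
Proof.
  intros Heq.
  pose proof (norm_tri x y) as Ht.
  pose proof (norm_sq x) as Hx. pose proof (norm_sq y) as Hy.
  pose proof (norm_sq (vadd x y)) as Hz.
  pose proof (norm_nonneg x); pose proof (norm_nonneg y); pose proof (norm_nonneg (vadd x y)).
  destruct x as [[x0 x1] x2]; destruct y as [[y0 y1] y2]; unfold dot, vadd in *; simpl in *.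
  set (a := norm ((x0, x1), x2)) in *. set (b := norm ((y0, y1), y2)) in *.
  set (c := norm ((x0 + y0, x1 + y1), x2 + y2)) in *.
  assert (Hc : c = a + b) by lra.
  assert (HD : x0*y0 + x1*y1 + x2*y2 = a * b).
  { rewrite Hc in Hz. nra. }
  assert (HS : (x0*b - y0*a)^2 + (x1*b - y1*a)^2 + (x2*b - y2*a)^2 = 0).
  { replace ((x0*b - y0*a)^2 + (x1*b - y1*a)^2 + (x2*b - y2*a)^2) with
      ((x0*x0+x1*x1+x2*x2)*(b*b) - 2*(a*b)*(x0*y0 + x1*y1 + x2*y2) + (y0*y0+y1*y1+y2*y2)*(a*a)) by ring.
    rewrite HD, <- Hx, <- Hy. ring. }
  rewrite <- !Rsqr_pow2 in HS; unfold Rsqr in HS. apply sum3_sq0 in HS.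
  destruct HS as [E0 [E1 E2]].
  intros m; destruct m as [|[|m]]; simpl; rewrite Hc; nra.
Qed.


Definition isZ (r : R) := exists z : Z, r = IZR z.
Definition evenR (r : R) := exists z : Z, r = 2 * IZR z.
Definition sgn (e : R) := e = 1 \/ e = -1.
Definition bit (b : R) := b = 0 \/ b = 1.

Lemma isZ_add x y : isZ x -> isZ y -> isZ (x + y).
Proof. intros [a ->] [b ->]. exists (a + b)%Z. rewrite plus_IZR; ring. Qed.
Lemma isZ_mul x y : isZ x -> isZ y -> isZ (x * y).
Proof. intros [a ->] [b ->]. exists (a * b)%Z. rewrite mult_IZR; ring. Qed.
Lemma isZ_opp x : isZ x -> isZ (- x).
Proof. intros [a ->]. exists (- a)%Z. rewrite opp_IZR; ring. Qed.
Lemma isZ_sub x y : isZ x -> isZ y -> isZ (x - y).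
Proof. intros. unfold Rminus. apply isZ_add; auto. apply isZ_opp; auto. Qed.
Lemma isZ_bit b : bit b -> isZ b.
Proof. intros [->| ->]; [exists 0%Z | exists 1%Z]; reflexivity. Qed.
Lemma isZ_sgn e : sgn e -> isZ e.
Proof. intros [->| ->]; [exists 1%Z | exists (-1)%Z]; reflexivity. Qed.
Lemma isZ_01 x : isZ x -> 0 <= x <= 1 -> bit x.
Proof.
  intros [z ->] [H1 H2]. apply le_IZR in H1. apply le_IZR in H2.
  assert (z = 0 \/ z = 1)%Z as [-> | ->] by lia; [left|right]; reflexivity.
Qed.

Lemma evenR_add x y : evenR x -> evenR y -> evenR (x + y).
Proof. intros [a ->] [b ->]. exists (a + b)%Z. rewrite plus_IZR; ring. Qed.
Lemma evenR_opp x : evenR x -> evenR (- x).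
Proof. intros [a ->]. exists (- a)%Z. rewrite opp_IZR; ring. Qed.
Lemma evenR_sgn e x : sgn e -> isZ x -> evenR ((e + 1) * x).
Proof.
  intros [->| ->] [z ->]; [exists z | exists 0%Z]; simpl; ring.
Qed.
Lemma evenR_ext x y : evenR x -> x = y -> evenR y.
Proof. intros H <-; auto. Qed.

Lemma sgn_fold e b b' : sgn e -> bit b -> bit b' -> sgn (- e * (1 - 2*b) * (1 - 2*b')).
Proof. intros [->| ->] [->| ->] [->| ->]; unfold sgn; lra. Qed.

Lemma comp_fold b b' e ai ci W V na nc :
  bit b -> bit b' -> sgn e -> 0 <= ai <= 1 -> 0 <= ci <= 1 -> 0 < na -> 0 < nc ->
  na*na = (b' - ai)^2 + W^2 -> nc*nc = (ci - b)^2 + V^2 -> W/na = V/nc ->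
  (- e * (1 - 2*b) * (1 - 2*b')) * (ci - b) = nc/na * (e * (b' - ai)).
Proof.
  intros Hb Hb' He Ha Hc Hna Hnc Ena Enc Hr.
  set (r := nc / na).
  assert (Hr0 : 0 < r) by (unfold r; apply Rdiv_lt_0_compat; auto).
  assert (HV : V = r * W).
  { unfold r. apply (Rmult_eq_reg_r (/ nc)). 2: apply Rinv_neq_0_compat; lra.
    unfold Rdiv in Hr. rewrite <- Hr. field. split; lra. }
  assert (Hnc' : nc = r * na) by (unfold r; field; lra).
  assert (HX : (ci - b)^2 = (r * (b' - ai))^2).
  { assert (E : (ci - b)^2 = nc*nc - V^2) by lra. rewrite E, HV, Hnc'.
    replace ((r*na)*(r*na)) with (r*r*(na*na)) by ring. rewrite Ena. ring. }
  assert (HXY : (ci - b - r * (b' - ai)) * (ci - b + r * (b' - ai)) = 0).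
  { replace ((ci - b - r * (b' - ai)) * (ci - b + r * (b' - ai))) with
      ((ci - b)^2 - (r * (b' - ai))^2) by ring. rewrite HX; ring. }
  fold r.
  apply Rmult_integral in HXY.
  destruct Hb as [-> | ->]; destruct Hb' as [-> | ->]; destruct He as [-> | ->];
  destruct HXY as [HXY|HXY]; nra.
Qed.

Definition dv (j : nat) (e M : R) (x : pt) : R := M + e * coord x j.

Definition valid (sA : R) (i : nat) (b : R) (j1 j2 : nat) (e1 e2 M N : R) : Prop :=
  tri i j1 j2 /\ sgn e1 /\ sgn e2 /\ isZ M /\ isZ N /\ evenR (M + N + b + sA).

Definition fold_ok sA i b j1 j2 e1 e2 M N i' b' j1' j2' e1' e2' M' N' : Prop :=
 valid sA i' b' j1' j2' e1' e2' M' N' /\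
 (forall z, coord z i = b -> coord z i' = b' ->
    dv j1' e1' M' z = dv j1 e1 M z /\ dv j2' e2' N' z = dv j2 e2 N z) /\
 (forall a p c, coord a i = b -> coord p i = b -> coord p i' = b' -> coord c i' = b' ->
   0 <= coord a i' <= 1 -> 0 <= coord c i <= 1 -> 0 < norm (vsub p a) -> 0 < norm (vsub c p) ->
   (forall j, (j < 3)%nat -> j <> i -> j <> i' ->
      coord (vsub p a) j / norm (vsub p a) = coord (vsub c p) j / norm (vsub c p)) ->
   dv j1' e1' M' c - dv j1' e1' M' p = norm (vsub c p) / norm (vsub p a) * (dv j1 e1 M p - dv j1 e1 M a) /\
   dv j2' e2' N' c - dv j2' e2' N' p = norm (vsub c p) / norm (vsub p a) * (dv j2 e2 N p - dv j2 e2 N a)).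

Lemma ratio_eq W V na nc : 0 < na -> 0 < nc -> W / na = V / nc -> V = nc / na * W.
Proof. intros h1 h2 H. apply (Rmult_eq_reg_r (/ nc)). 2: apply Rinv_neq_0_compat; lra.
  unfold Rdiv in H. rewrite <- H. field. split; lra. Qed.

Lemma fold1 sA i b j1 j2 e1 e2 M N b' :
  valid sA i b j1 j2 e1 e2 M N -> bit b -> bit b' ->
  exists j1' j2' e1' e2' M' N', fold_ok sA i b j1 j2 e1 e2 M N j1 b' j1' j2' e1' e2' M' N'.
Proof.
  intros [Ht [He1 [He2 [HM [HN Hev]]]]] Hb Hb'.
  set (e1' := - e1 * (1 - 2*b) * (1 - 2*b')).
  exists i, j2, e1', e2, (M + e1 * b' - e1' * b), N.
  split; [|split].
  - split; [apply tri_perm2; auto|]. split; [apply sgn_fold; auto|].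
    split; auto. split.
    + apply isZ_sub; [apply isZ_add; auto|]; apply isZ_mul; auto.
      * apply isZ_sgn; auto.
      * apply isZ_bit; auto.
      * apply isZ_sgn, sgn_fold; auto.
      * apply isZ_bit; auto.
    + split; auto.
      apply (evenR_ext ((M + N + b + sA) + ((e1 + 1) * b' + - ((e1' + 1) * b)))).
      * apply evenR_add; auto. apply evenR_add. apply evenR_sgn; auto; apply isZ_bit; auto.
        apply evenR_opp, evenR_sgn. apply sgn_fold; auto. apply isZ_bit; auto.
      * ring.
  - intros z Hzi Hzj. unfold dv. rewrite Hzi, Hzj. split; ring.
  - intros a p c Hai Hpi Hpj Hcj Ha Hc Hna Hnc Hcond.
    unfold dv. rewrite Hpi, Hpj.
    destruct Ht as [Hi [Hj1 [Hj2 [Hij1 [Hij2 Hj12]]]]].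
    pose proof (Hcond j2 Hj2 ltac:(lia) ltac:(lia)) as Hc2.
    rewrite !coord_vsub in Hc2.
    apply ratio_eq in Hc2; auto.
    split.
    + pose proof (comp_fold b b' e1 (coord a j1) (coord c i) (coord p j2 - coord a j2)
        (coord c j2 - coord p j2) (norm (vsub p a)) (norm (vsub c p)) Hb Hb' He1 Ha Hc Hna Hnc) as HH.
      transitivity (e1' * (coord c i - b)); [ring|].
      transitivity (norm (vsub c p) / norm (vsub p a) * (e1 * (b' - coord a j1))); [|ring].
      apply HH.
      * rewrite norm_sq, (dot_tri i j1 j2); [|split; auto; lia].
        rewrite !coord_vsub, Hai, Hpi, Hpj. ring.
      * rewrite norm_sq, (dot_tri i j1 j2); [|split; auto; lia].
        rewrite !coord_vsub, Hpi, Hpj, Hcj. ring.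
      * pose proof (Hcond j2 Hj2 ltac:(lia) ltac:(lia)) as H'.
        rewrite !coord_vsub in H'. exact H'.
    + transitivity (e2 * (coord c j2 - coord p j2)); [ring|]. rewrite Hc2. ring.
Qed.

Lemma valid_swap sA i b j1 j2 e1 e2 M N :
  valid sA i b j1 j2 e1 e2 M N -> valid sA i b j2 j1 e2 e1 N M.
Proof.
  intros [Ht [He1 [He2 [HM [HN Hev]]]]]. split; [apply tri_perm1; auto|].
  repeat split; auto. eapply evenR_ext; [exact Hev| ring].
Qed.

Lemma fold_ok_swap sA i b j1 j2 e1 e2 M N i' b' j1' j2' e1' e2' M' N' :
  fold_ok sA i b j2 j1 e2 e1 N M i' b' j1' j2' e1' e2' M' N' ->
  fold_ok sA i b j1 j2 e1 e2 M N i' b' j2' j1' e2' e1' N' M'.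
Proof.
  intros [Hv [Ha Hb]]. split; [apply valid_swap; auto|]. split.
  - intros z H1 H2. destruct (Ha z H1 H2); split; auto.
  - intros a p c H1 H2 H3 H4 H5 H6 H7 H8 H9.
    destruct (Hb a p c H1 H2 H3 H4 H5 H6 H7 H8 H9); split; auto.
Qed.

Lemma fold sA i b j1 j2 e1 e2 M N i' b' :
  valid sA i b j1 j2 e1 e2 M N -> bit b -> bit b' -> (i' < 3)%nat -> i' <> i ->
  exists j1' j2' e1' e2' M' N', fold_ok sA i b j1 j2 e1 e2 M N i' b' j1' j2' e1' e2' M' N'.
Proof.
  intros Hv Hb Hb' Hi' Hne.
  pose proof Hv as [Ht _].
  destruct (tri_cover i j1 j2 i' Ht Hi') as [E|[E|E]]; [lia| subst i'; apply fold1; auto|].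
  subst i'. apply valid_swap in Hv.
  destruct (fold1 _ _ _ _ _ _ _ _ _ b' Hv Hb Hb') as (j1' & j2' & e1' & e2' & M' & N' & H).
  exists j2', j1', e2', e1', N', M'. apply fold_ok_swap. auto.
Qed.

Lemma transfer sA i b j1 j2 e1 e2 M N i0 b0 x y :
  is_face i b -> is_face i0 b0 -> valid sA i b j1 j2 e1 e2 M N ->
  in_face i b x -> in_face i b y -> in_face i0 b0 x -> in_face i0 b0 y ->
  exists j1' j2' e1' e2' M' N', valid sA i0 b0 j1' j2' e1' e2' M' N' /\
    dv j1' e1' M' x = dv j1 e1 M x /\ dv j2' e2' N' x = dv j2 e2 N x /\
    dv j1' e1' M' y = dv j1 e1 M y /\ dv j2' e2' N' y = dv j2 e2 N y.
Proof.
  intros [Hi Hb] [Hi0 Hb0] Hv [_ Hx] [_ Hy] [_ Hx0] [_ Hy0].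
  destruct (Nat.eq_dec i0 i) as [E|E].
  - subst i0. replace b0 with b by congruence.
    exists j1, j2, e1, e2, M, N. split; [exact Hv|]. repeat split; auto.
  - destruct (fold sA i b j1 j2 e1 e2 M N i0 b0 Hv Hb Hb0 Hi0 E)
      as (j1' & j2' & e1' & e2' & M' & N' & Hv' & Ha & _).
    exists j1', j2', e1', e2', M', N'.
    destruct (Ha x Hx Hx0); destruct (Ha y Hy Hy0). split; [exact Hv'|]. repeat split; auto.
Qed.


Definition sumc (x : pt) := coord x 0 + coord x 1 + coord x 2.

Definition Inv (sA : R) (p : nat -> pt) (ux uy : R) (k : nat) : Prop :=
  exists i b j1 j2 e1 e2 M N, is_face i b /\ valid sA i b j1 j2 e1 e2 M N /\
    in_face i b (p k) /\ in_face i b (p (S k)) /\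
    dv j1 e1 M (p k) = path_len p k * ux /\ dv j2 e2 N (p k) = path_len p k * uy /\
    dv j1 e1 M (p (S k)) = path_len p (S k) * ux /\ dv j2 e2 N (p (S k)) = path_len p (S k) * uy.

Lemma norm_scale l v : 0 <= l -> norm (vscale l v) = l * norm v.
Proof.
  intros Hl. unfold norm.
  replace (dot (vscale l v) (vscale l v)) with ((l * l) * dot v v).
  - rewrite sqrt_mult; [| nra | apply dot_nonneg]. rewrite sqrt_square; auto.
  - destruct v as [[a b] c]; unfold dot, vscale; simpl; ring.
Qed.

Lemma path_len_S p k : path_len p (S k) = path_len p k + norm (vsub (p (S k)) (p k)).
Proof. reflexivity. Qed.

Lemma step A B n p ux uy k : geodesic_traj A B n p -> (S k < n)%nat ->
  Inv (sumc A) p ux uy k -> Inv (sumc A) p ux uy (S k).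
Proof.
  intros [Hn [H0 [Hnn [Hseg [Hbv [Hint Hstr]]]]]] Hk HI.
  pose proof (Hstr (S k) ltac:(lia)) as Hs. simpl pred in Hs.
  destruct Hs as (i0 & b0 & i1 & b1 & Hf0 & Hf1 & Ha0 & Hq0 & Hq1 & Hc1 & HC).
  destruct HI as (i & b & j1 & j2 & e1 & e2 & M & N & Hf & Hv & Hak & Hqk & E1 & E2 & E3 & E4).
  destruct (transfer _ _ _ _ _ _ _ _ _ i0 b0 (p k) (p (S k)) Hf Hf0 Hv Hak Hqk Ha0 Hq0)
    as (j1' & j2' & e1' & e2' & M' & N' & Hv' & F1 & F2 & F3 & F4).
  assert (Hna : 0 < norm (vsub (p (S k)) (p k))) by (apply norm_pos_neq, (Hseg k); lia).
  assert (Hnc : 0 < norm (vsub (p (S (S k))) (p (S k)))) by (apply norm_pos_neq, (Hseg (S k)); lia).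
  pose proof (path_len_S p k) as L1. pose proof (path_len_S p (S k)) as L2.
  set (a := p k) in *. set (q := p (S k)) in *. set (c := p (S (S k))) in *.
  set (na := norm (vsub q a)) in *. set (nc := norm (vsub c q)) in *.
  destruct HC as [[Ei [Eb [l [Hl Hcl]]]] | [Ene Hcond]].
  - subst i1 b1.
    assert (Hnc' : nc = l * na) by (unfold nc; rewrite Hcl; apply norm_scale; lra).
    assert (Cj : forall j, coord c j = coord q j + l * (coord q j - coord a j)).
    { intros j. pose proof (f_equal (fun v => coord v j) Hcl) as Hj. simpl in Hj.
      rewrite coord_vscale, !coord_vsub in Hj. lra. }
    exists i0, b0, j1', j2', e1', e2', M', N'.
    change (p (S k)) with q; change (p (S (S k))) with c.
    split; [auto|]. split; [auto|]. split; [auto|]. split; [auto|].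
    unfold dv in *. rewrite !Cj.
    repeat split.
    + rewrite F3; auto.
    + rewrite F4; auto.
    + transitivity (M' + e1' * coord q j1' + l * ((M' + e1' * coord q j1') - (M' + e1' * coord a j1'))); [ring|].
      rewrite F1, F3, E1, E3, L2, Hnc', L1. ring.
    + transitivity (N' + e2' * coord q j2' + l * ((N' + e2' * coord q j2') - (N' + e2' * coord a j2'))); [ring|].
      rewrite F2, F4, E2, E4, L2, Hnc', L1. ring.
  - destruct Hf0 as [Hi0 Hb0]. destruct Hf1 as [Hi1 Hb1].
    destruct (fold _ _ _ _ _ _ _ _ _ i1 b1 Hv' Hb0 Hb1 Hi1 (not_eq_sym Ene))
      as (j1'' & j2'' & e1'' & e2'' & M'' & N'' & Hv'' & Ga & Gb).
    destruct Ha0 as [Hac Ha0']. destruct Hq0 as [Hqc Hq0']. destruct Hq1 as [_ Hq1'].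
    destruct Hc1 as [Hcc Hc1'].
    destruct (Gb a q c Ha0' Hq0' Hq1' Hc1' (Hac i1 Hi1) (Hcc i0 Hi0) Hna Hnc Hcond) as [G1 G2]. change (norm (vsub c q)) with nc in G1, G2; change (norm (vsub q a)) with na in G1, G2.
    destruct (Ga q Hq0' Hq1') as [G3 G4].
    exists i1, b1, j1'', j2'', e1'', e2'', M'', N''.
    change (p (S k)) with q; change (p (S (S k))) with c.
    split; [split; auto|]. split; [auto|]. split; [split; auto|]. split; [split; auto|].
    repeat split.
    + rewrite G3, F3; auto.
    + rewrite G4, F4; auto.
    + transitivity (dv j1'' e1'' M'' q + nc / na * (dv j1' e1' M' q - dv j1' e1' M' a)); [lra|].
      rewrite G3, F1, F3, E1, E3, L2, L1. field. lra.
    + transitivity (dv j2'' e2'' N'' q + nc / na * (dv j2' e2' N' q - dv j2' e2' N' a)); [lra|].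
      rewrite G4, F2, F4, E2, E4, L2, L1. field. lra.
Qed.


Lemma sumc_tri i j k x : tri i j k -> sumc x = coord x i + coord x j + coord x k.
Proof.
  intros [Hi [Hj [Hk [H1 [H2 H3]]]]].
  destruct x as [[x0 x1] x2]; unfold sumc; simpl.
  destruct i as [|[|[|i]]]; destruct j as [|[|[|j]]]; destruct k as [|[|[|k]]];
    try lia; simpl; ring.
Qed.

Lemma init A B n p : geodesic_traj A B n p -> is_vertex A ->
  exists ux uy, ux * ux + uy * uy = 1 /\ Inv (sumc A) p ux uy 0.
Proof.
  intros [Hn [H0 [Hnn [Hseg [Hbv [Hint Hstr]]]]]] HA.
  destruct (Hseg 0%nat ltac:(lia)) as [Hne (i & b & Hf & Ha & Hp1)].
  pose proof Hf as [Hi Hb].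
  destruct (other2 i Hi) as (j1 & j2 & Ht).
  pose proof (norm_pos_neq _ _ Hne) as Hna.
  set (na := norm (vsub (p 1%nat) (p 0%nat))) in *.
  pose proof Ht as [_ [Hj1 [Hj2 _]]].
  exists ((coord (p 1%nat) j1 - coord A j1) / na), ((coord (p 1%nat) j2 - coord A j2) / na).
  split.
  - assert (E : na * na = (coord (p 1%nat) j1 - coord A j1)^2 + (coord (p 1%nat) j2 - coord A j2)^2).
    { unfold na. rewrite norm_sq, (dot_tri i j1 j2 _ _ Ht), !coord_vsub.
      destruct Ha as [_ Ha]; destruct Hp1 as [_ Hp1]. rewrite Ha, Hp1, H0. ring. }
    apply (Rmult_eq_reg_r (na * na)); [|nra].
    rewrite Rmult_1_l.
    transitivity ((coord (p 1%nat) j1 - coord A j1)^2 + (coord (p 1%nat) j2 - coord A j2)^2); [field; lra | lra].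
  - exists i, b, j1, j2, 1, 1, (- coord A j1), (- coord A j2).
    split; [auto|]. split.
    + split; [auto|]. split; [left; auto|]. split; [left; auto|].
      assert (bit (coord A j1)) by (apply HA; auto).
      assert (bit (coord A j2)) by (apply HA; auto).
      assert (bit (coord A i)) as Hai by (apply HA; auto).
      split; [apply isZ_opp, isZ_bit; auto|]. split; [apply isZ_opp, isZ_bit; auto|].
      apply isZ_bit in Hai. destruct Hai as [z Hz]. exists z.
      rewrite (sumc_tri i j1 j2 _ Ht). destruct Ha as [_ Ha]. rewrite H0 in Ha.
      rewrite <- Ha, <- Hz. ring.
    + split; [auto|]. split; [auto|].
      assert (L1 : path_len p 1 = na) by (unfold na; simpl; unfold pdist; ring).
      change (path_len p 0) with 0. rewrite L1.
      unfold dv. rewrite H0. repeat split; field; lra.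
Qed.

Lemma inv_all A B n p ux uy : geodesic_traj A B n p -> Inv (sumc A) p ux uy 0 ->
  forall k, (k < n)%nat -> Inv (sumc A) p ux uy k.
Proof.
  intros Hg H0 k. induction k; intros Hk; auto.
  apply (step A B n); auto. apply IHk; lia.
Qed.

Lemma path_mono p k m : (k <= m)%nat -> path_len p k <= path_len p m.
Proof.
  induction 1; [lra|]. rewrite path_len_S. pose proof (norm_nonneg (vsub (p (S m)) (p m))). lra.
Qed.

Lemma path_strict A B n p k m : geodesic_traj A B n p -> (k < m)%nat -> (m <= n)%nat ->
  path_len p k < path_len p m.
Proof.
  intros Hg Hkm Hmn. destruct m as [|m]; [lia|].
  pose proof (path_mono p k m ltac:(lia)).
  rewrite path_len_S.
  destruct Hg as [_ [_ [_ [Hseg _]]]].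
  pose proof (norm_pos_neq _ _ (proj1 (Hseg m ltac:(lia)))). lra.
Qed.

Lemma find_seg p n t : (1 <= n)%nat -> 0 <= t <= path_len p n ->
  exists k, (k < n)%nat /\ path_len p k <= t <= path_len p (S k).
Proof.
  induction n as [|n IH]; intros Hn Ht; [lia|].
  destruct (Nat.eq_dec n 0) as [->|Hn0].
  - exists 0%nat; simpl path_len at 1; split; [lia|lra].
  - destruct (Rle_dec t (path_len p n)) as [h|h].
    + destruct (IH ltac:(lia) ltac:(lra)) as (k & Hk & Hk2). exists k; split; [lia|auto].
    + exists n; split; [lia|lra].
Qed.

Lemma pdist_self x : pdist x x = 0.
Proof.
  unfold pdist, norm. replace (dot (vsub x x) (vsub x x)) with 0. apply sqrt_0.
  destruct x as [[a b] c]; unfold dot, vsub; simpl; ring.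
Qed.

Lemma chain p k m : (k <= m)%nat -> pdist (p k) (p m) <= path_len p m - path_len p k.
Proof.
  induction 1. rewrite pdist_self; lra.
  pose proof (pdist_tri (p k) (p m) (p (S m))). rewrite path_len_S. unfold pdist in *. lra.
Qed.

Lemma lattice_vertex sA i b j1 j2 e1 e2 M N x z1 z2 :
  is_face i b -> valid sA i b j1 j2 e1 e2 M N -> in_face i b x ->
  dv j1 e1 M x = IZR z1 -> dv j2 e2 N x = IZR z2 -> is_vertex x.
Proof.
  intros [Hi Hb] [Ht [He1 [He2 [HM [HN _]]]]] [Hc Hx] E1 E2 m Hm.
  pose proof Ht as [_ [Hj1 [Hj2 _]]].
  destruct (tri_cover i j1 j2 m Ht Hm) as [->|[->| ->]].
  - rewrite Hx; auto.
  - apply isZ_01; [|apply Hc; auto]. unfold dv in E1.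
    replace (coord x j1) with (e1 * (IZR z1 - M)) by (destruct He1 as [-> | ->]; lra).
    apply isZ_mul; [apply isZ_sgn; auto|]. apply isZ_sub; auto. exists z1; auto.
  - apply isZ_01; [|apply Hc; auto]. unfold dv in E2.
    replace (coord x j2) with (e2 * (IZR z2 - N)) by (destruct He2 as [-> | ->]; lra).
    apply isZ_mul; [apply isZ_sgn; auto|]. apply isZ_sub; auto. exists z2; auto.
Qed.


Lemma no_mid A B n p ux uy : geodesic_traj A B n p ->
  (forall k, (k < n)%nat -> Inv (sumc A) p ux uy k) ->
  forall z1 z2 : Z, path_len p n * ux = 2 * IZR z1 -> path_len p n * uy = 2 * IZR z2 -> False.
Proof.
  intros Hg HI z1 z2 Ez1 Ez2.
  pose proof Hg as [Hn [H0 [Hnn [Hseg [Hbv [Hint Hstr]]]]]].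
  set (L := path_len p n) in *.
  assert (HL : 0 < L) by (unfold L; apply (path_strict A B n p 0 n Hg); lia).
  set (t := L / 2).
  assert (Ht : 0 <= t <= path_len p n) by (unfold t; fold L; lra).
  destruct (find_seg p n t Hn Ht) as (k & Hk & Hk1 & Hk2).
  destruct (HI k Hk) as (i & b & j1 & j2 & e1 & e2 & M & N & Hf & Hv & Hak & Hqk & E1 & E2 & E3 & E4).
  assert (Eu1 : t * ux = IZR z1) by (unfold t; lra).
  assert (Eu2 : t * uy = IZR z2) by (unfold t; lra).
  pose proof (path_len_S p k) as Lk.
  pose proof (norm_pos_neq _ _ (proj1 (Hseg k Hk))) as Hna.
  destruct (Req_dec t (path_len p k)) as [Et|Et].
  - assert (Hv' : is_vertex (p k)).
    { apply (lattice_vertex (sumc A) i b j1 j2 e1 e2 M N _ z1 z2 Hf Hv Hak).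
      rewrite E1, <- Et; auto. rewrite E2, <- Et; auto. }
    destruct k as [|k].
    + simpl in Et. unfold t in Et. lra.
    + apply (Hbv (S k)); auto; lia.
  - destruct (Req_dec t (path_len p (S k))) as [Et'|Et'].
    + assert (Hv' : is_vertex (p (S k))).
      { apply (lattice_vertex (sumc A) i b j1 j2 e1 e2 M N _ z1 z2 Hf Hv Hqk).
        rewrite E3, <- Et'; auto. rewrite E4, <- Et'; auto. }
      assert (S k <> n).
      { intros E. rewrite E in Et'. change (path_len p n) with L in Et'. unfold t in Et'. lra. }
      apply (Hbv (S k)); auto; lia.
    + set (s0 := path_len p k) in *. set (s1 := path_len p (S k)) in *.
      set (tau := (t - s0) / (s1 - s0)).
      assert (Htau : 0 < tau < 1).
      { unfold tau. split.
        - apply Rdiv_lt_0_compat; lra.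
        - apply (Rmult_lt_reg_r (s1 - s0)); [lra|]. field_simplify; lra. }
      set (q := vadd (p k) (vscale tau (vsub (p (S k)) (p k)))).
      assert (Cq : forall m, coord q m = coord (p k) m + tau * (coord (p (S k)) m - coord (p k) m)).
      { intros m. unfold q. rewrite coord_vadd, coord_vscale, coord_vsub. ring. }
      assert (Hqf : in_face i b q).
      { destruct Hak as [Hac Hai]; destruct Hqk as [Hqc Hqi]. split.
        - intros m Hm. rewrite Cq. pose proof (Hac m Hm); pose proof (Hqc m Hm). nra.
        - rewrite Cq, Hai, Hqi. ring. }
      assert (Hdv : forall j e MM, dv j e MM q = dv j e MM (p k) + tau * (dv j e MM (p (S k)) - dv j e MM (p k))).
      { intros. unfold dv. rewrite Cq. ring. }
      assert (Htt : s0 + tau * (s1 - s0) = t) by (unfold tau; field; lra).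
      assert (Hvq : is_vertex q).
      { apply (lattice_vertex (sumc A) i b j1 j2 e1 e2 M N _ z1 z2 Hf Hv Hqf).
        - rewrite Hdv, E1, E3, <- Eu1, <- Htt. ring.
        - rewrite Hdv, E2, E4, <- Eu2, <- Htt. ring. }
      apply (Hint k tau Hk Htau Hvq).
Qed.


Lemma zcase (a b w : Z) : (a + b = 2*w)%Z -> (a*a+b*b < 10)%Z ->
  (forall x y, a = 2*x -> b = 2*y -> False)%Z -> (a*a + b*b = 2)%Z.
Proof.
  intros H1 H2 H3.
  assert (Ha : (-3 <= a <= 3)%Z) by nia.
  assert (Hb : (-3 <= b <= 3)%Z) by nia.
  assert (Ea : (a = -3 \/ a = -2 \/ a = -1 \/ a = 0 \/ a = 1 \/ a = 2 \/ a = 3)%Z) by lia.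
  assert (Eb : (b = -3 \/ b = -2 \/ b = -1 \/ b = 0 \/ b = 1 \/ b = 2 \/ b = 3)%Z) by lia.
  destruct Ea as [->|[->|[->|[->|[->|[->| ->]]]]]];
  destruct Eb as [->|[->|[->|[->|[->|[->| ->]]]]]];
  first [ reflexivity | lia 
        | exfalso; apply (H3 ((-1))%Z ((-1))%Z); reflexivity
        | exfalso; apply (H3 ((-1))%Z (0)%Z); reflexivity
        | exfalso; apply (H3 ((-1))%Z (1)%Z); reflexivity
        | exfalso; apply (H3 (0)%Z ((-1))%Z); reflexivity
        | exfalso; apply (H3 (0)%Z (0)%Z); reflexivity
        | exfalso; apply (H3 (0)%Z (1)%Z); reflexivity
        | exfalso; apply (H3 (1)%Z ((-1))%Z); reflexivity
        | exfalso; apply (H3 (1)%Z (0)%Z); reflexivity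
        | exfalso; apply (H3 (1)%Z (1)%Z); reflexivity ].
Qed.

Lemma opp_facts A B : opposite_on_face A B ->
  exists i j k, tri i j k /\ coord A i = coord B i /\ bit (coord A i) /\
    coord B j = 1 - coord A j /\ coord B k = 1 - coord A k /\ bit (coord A j) /\ bit (coord A k).
Proof.
  intros [HA [HB (i & Hi & Ei & Hne)]].
  destruct (other2 i Hi) as (j & k & Ht).
  pose proof Ht as [_ [Hj [Hk [H1 [H2 H3]]]]].
  exists i, j, k. split; auto. split; auto. split; [apply HA; auto|].
  pose proof (Hne j Hj ltac:(lia)). pose proof (Hne k Hk ltac:(lia)).
  destruct (HA j Hj); destruct (HB j Hj); destruct (HA k Hk); destruct (HB k Hk);
  repeat split; unfold bit; try lra; exfalso; congruence.
Qed.

Lemma sqrt2_pos : 0 < sqrt 2.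
Proof. apply sqrt_lt_R0; lra. Qed.

Lemma opp_dist A B : opposite_on_face A B -> pdist A B = sqrt 2.
Proof.
  intros H. destruct (opp_facts A B H) as (i & j & k & Ht & E1 & _ & E2 & E3 & Hj & Hk).
  unfold pdist, norm. f_equal. rewrite (dot_tri i j k _ _ Ht), !coord_vsub, E1, E2, E3.
  destruct Hj as [-> | ->]; destruct Hk as [-> | ->]; ring.
Qed.

Lemma opp_even A B : opposite_on_face A B -> evenR (sumc A + sumc B).
Proof.
  intros H. destruct (opp_facts A B H) as (i & j & k & Ht & E1 & Hb & E2 & E3 & _ & _).
  apply isZ_bit in Hb. destruct Hb as [z Hz]. exists (z + 1)%Z.
  rewrite (sumc_tri i j k A Ht), (sumc_tri i j k B Ht), E1, E2, E3, plus_IZR. rewrite E1 in Hz.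
  rewrite <- Hz. simpl. ring.
Qed.

Lemma all_on_seg A B n p : geodesic_traj A B n p -> opposite_on_face A B ->
  path_len p n = sqrt 2 -> forall k, (k <= n)%nat -> on_segment A B (p k).
Proof.
  intros Hg Ho HL k Hk.
  pose proof Hg as [Hn [H0 [Hnn _]]].
  pose proof (chain p 0 k ltac:(lia)) as C1. pose proof (chain p k n Hk) as C2.
  rewrite H0 in C1. rewrite Hnn in C2. change (path_len p 0) with 0 in C1.
  pose proof (opp_dist A B Ho) as Hd.
  set (x := vsub (p k) A). set (y := vsub B (p k)).
  assert (Exy : vadd x y = vsub B A).
  { apply pt_ext; intros m _. unfold x, y. rewrite coord_vadd, !coord_vsub. ring. }
  assert (Hle : norm x + norm y <= norm (vadd x y)).
  { rewrite Exy. unfold pdist in *.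
    assert (C1' : norm x <= path_len p k) by (unfold x; lra).
    assert (C2' : norm y <= path_len p n - path_len p k) by (unfold y; lra).
    rewrite Hd, <- HL. lra. }
  pose proof (tri_eq x y Hle) as Heq. rewrite Exy in Heq.
  unfold pdist in Hd. rewrite Hd in Heq.
  pose proof sqrt2_pos. pose proof (norm_nonneg x). pose proof (norm_nonneg y).
  exists (norm x / sqrt 2). split.
  - split. unfold Rdiv; apply Rmult_le_pos; [lra|]; left; apply Rinv_0_lt_compat; lra.
    apply (Rmult_le_reg_r (sqrt 2)); auto. field_simplify; [|lra].
    rewrite Exy in Hle. unfold pdist in Hd; rewrite Hd in Hle. lra.
  - apply pt_ext. intros m _. rewrite coord_vadd, coord_vscale.
    pose proof (Heq m) as Hm.
    assert (Hc : coord x m = coord (p k) m - coord A m) by (unfold x; apply coord_vsub).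
    rewrite Hc, coord_vsub in Hm. rewrite coord_vsub.
    apply (Rmult_eq_reg_r (sqrt 2)); [|lra].
    field_simplify; [|lra]. lra.
Qed.


Lemma main4 A B n p : opposite_on_face A B -> geodesic_traj A B n p ->
  leaves_segment A B n p -> sqrt 10 <= path_len p n.
Proof.
  intros Ho Hg Hl.
  destruct (Rle_dec (sqrt 10) (path_len p n)) as [h|h]; auto. exfalso.
  apply Rnot_le_lt in h.
  pose proof Ho as [HA [HB _]].
  destruct (init A B n p Hg HA) as (ux & uy & Hu & H0).
  pose proof (inv_all A B n p ux uy Hg H0) as HI.
  pose proof Hg as [Hn [HpA [HpB _]]].
  destruct (HI (pred n) ltac:(lia)) as (i & b & j1 & j2 & e1 & e2 & M & N & Hf & Hv & _ & HBf & _ & _ & E3 & E4).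
  replace (S (pred n)) with n in * by lia.
  rewrite HpB in HBf, E3, E4.
  pose proof Hv as [Ht [He1 [He2 [HM [HN Hev]]]]].
  pose proof Ht as [Hi [Hj1 [Hj2 _]]].
  assert (ZP : isZ (dv j1 e1 M B)).
  { unfold dv. apply isZ_add; auto. apply isZ_mul; [apply isZ_sgn; auto| apply isZ_bit, HB; auto]. }
  assert (ZQ : isZ (dv j2 e2 N B)).
  { unfold dv. apply isZ_add; auto. apply isZ_mul; [apply isZ_sgn; auto| apply isZ_bit, HB; auto]. }
  assert (EP : evenR (dv j1 e1 M B + dv j2 e2 N B)).
  { apply (evenR_ext ((M + N + b + sumc A) + - (sumc A + sumc B) + ((e1 + 1) * coord B j1 + (e2 + 1) * coord B j2))).
    - apply evenR_add; [apply evenR_add; auto; apply evenR_opp, opp_even; auto|].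
      apply evenR_add; apply evenR_sgn; auto; apply isZ_bit, HB; auto.
    - rewrite (sumc_tri i j1 j2 B Ht). destruct HBf as [_ HBf]. rewrite HBf. unfold dv. ring. }
  destruct ZP as [z1 Ez1]. destruct ZQ as [z2 Ez2]. destruct EP as [w Ew].
  set (L := path_len p n) in *.
  assert (HL0 : 0 <= L) by (unfold L; apply (path_mono p 0 n); lia).
  assert (HLL : L * L = IZR z1 * IZR z1 + IZR z2 * IZR z2).
  { rewrite <- Ez1, <- Ez2, E3, E4.
    transitivity (L * L * (ux * ux + uy * uy)); [rewrite Hu; ring | ring]. }
  assert (HL10 : L * L < 10).
  { pose proof (sqrt_sqrt 10 ltac:(lra)). pose proof (sqrt_pos 10). nra. }
  assert (Zsum : (z1 + z2 = 2 * w)%Z).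
  { apply eq_IZR. rewrite plus_IZR, mult_IZR. simpl (IZR 2). lra. }
  assert (Zlt : (z1 * z1 + z2 * z2 < 10)%Z).
  { apply lt_IZR. rewrite plus_IZR, !mult_IZR. simpl (IZR 10). lra. }
  assert (Zmid : forall x y, z1 = (2 * x)%Z -> z2 = (2 * y)%Z -> False).
  { intros x y Ex Ey. apply (no_mid A B n p ux uy Hg HI x y).
    - fold L. rewrite <- E3, Ez1, Ex, mult_IZR. reflexivity.
    - fold L. rewrite <- E4, Ez2, Ey, mult_IZR. reflexivity. }
  pose proof (zcase z1 z2 w Zsum Zlt Zmid) as Z2.
  assert (HL2 : L = sqrt 2).
  { rewrite <- (sqrt_square L HL0). f_equal. rewrite HLL.
    rewrite <- !mult_IZR, <- plus_IZR, Z2. reflexivity. }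
  destruct Hl as (k & Hk & Hnot). apply Hnot.
  apply (all_on_seg A B n p Hg Ho HL2 k Hk).
Qed.


Definition mk (i j : nat) (vi vj vk : R) : pt :=
  let f m := if Nat.eqb m i then vi else if Nat.eqb m j then vj else vk in
  (f 0%nat, f 1%nat, f 2%nat).

Lemma coord_mk i j k vi vj vk : tri i j k ->
  coord (mk i j vi vj vk) i = vi /\ coord (mk i j vi vj vk) j = vj /\ coord (mk i j vi vj vk) k = vk.
Proof.
  intros [Hi [Hj [Hk [H1 [H2 H3]]]]]. unfold mk.
  destruct i as [|[|[|i]]]; destruct j as [|[|[|j]]]; destruct k as [|[|[|k]]];
    try lia; simpl; auto.
Qed.

Lemma vertex_cube x : is_vertex x -> in_cube x.
Proof. intros H m Hm. destruct (H m Hm) as [-> | ->]; lra. Qed.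

Lemma cube_tri i j k x : tri i j k -> 0 <= coord x i <= 1 -> 0 <= coord x j <= 1 ->
  0 <= coord x k <= 1 -> in_cube x.
Proof. intros Ht H1 H2 H3 m Hm. destruct (tri_cover i j k m Ht Hm) as [->|[->| ->]]; auto. Qed.

Lemma diag_geo A B : opposite_on_face A B ->
  geodesic_traj A B 1 (fun k => match k with O => A | _ => B end).
Proof.
  intros Ho. pose proof Ho as [HA [HB _]].
  destruct (opp_facts A B Ho) as (i & j & k & Ht & E1 & Hb & E2 & E3 & Hj & Hk).
  pose proof Ht as [Hi [Hj' [Hk' _]]].
  split; [lia|]. split; [reflexivity|]. split; [reflexivity|]. split; [|split; [|split]].
  - intros m Hm. assert (m = 0%nat) by lia. subst m. split.
    + intros E. rewrite <- E in E2. destruct Hj as [Hj|Hj]; rewrite Hj in E2; lra.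
    + exists i, (coord A i). split; [split; auto|]. split; split; auto; apply vertex_cube; auto.
  - intros m Hm. lia.
  - intros m t Hm Htt Hv. assert (m = 0%nat) by lia. subst m.
    destruct (Hv j Hj') as [Hc|Hc]; rewrite coord_vadd, coord_vscale, coord_vsub, E2 in Hc;
      destruct Hj as [Hj|Hj]; rewrite Hj in Hc; lra.
  - intros m Hm. lia.
Qed.

Lemma sqrt10_eq : 3 * sqrt (10/9) = sqrt 10.
Proof.
  replace 10 with (9 * (10/9)) at 2 by field.
  rewrite sqrt_mult; [|lra|lra]. f_equal.
  replace 9 with (3*3) by ring. rewrite sqrt_square; lra.
Qed.

Ltac rw Eb Ej Ek := try rewrite <- Eb; try rewrite <- Ej; try rewrite <- Ek.
Ltac rwh Eb Ej Ek H := try rewrite <- Eb in H; try rewrite <- Ej in H; try rewrite <- Ek in H.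

Lemma ex10 A B : opposite_on_face A B ->
  exists n p, geodesic_traj A B n p /\ leaves_segment A B n p /\ path_len p n = sqrt 10.
Proof.
  intros Ho. pose proof Ho as [HA [HB _]].
  destruct (opp_facts A B Ho) as (i & j & k & Ht & E1 & Hb & E2 & E3 & Hj & Hk).
  pose proof Ht as [Hi [Hj' [Hk' [Hij [Hik Hjk]]]]].
  remember (coord A i) as b eqn:Eb. remember (coord A j) as aj eqn:Ej. remember (coord A k) as ak eqn:Ek.
  set (d := 1 - 2 * ak).
  set (p1 := mk i j (1 - b) aj (ak + d/3)).
  set (p2 := mk i j (1 - b) (1 - aj) (ak + 2*d/3)).
  destruct (coord_mk i j k (1 - b) aj (ak + d/3) Ht) as (P1i & P1j & P1k). fold p1 in P1i, P1j, P1k.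
  destruct (coord_mk i j k (1 - b) (1 - aj) (ak + 2*d/3) Ht) as (P2i & P2j & P2k). fold p2 in P2i, P2j, P2k.
  set (q := fun m => match m with 0%nat => A | 1%nat => p1 | 2%nat => p2 | _ => B end).
  assert (Hbb : bit b) by auto.
  assert (N1 : norm (vsub p1 A) = sqrt (10/9)).
  { unfold norm. f_equal. rewrite (dot_tri i j k _ _ Ht), !coord_vsub, P1i, P1j, P1k.
    rw Eb Ej Ek. unfold d. destruct Hbb as [-> | ->]; destruct Hk as [-> | ->]; field. }
  assert (N2 : norm (vsub p2 p1) = sqrt (10/9)).
  { unfold norm. f_equal. rewrite (dot_tri i j k _ _ Ht), !coord_vsub, P1i, P1j, P1k, P2i, P2j, P2k.
    rw Eb Ej Ek. unfold d. destruct Hj as [-> | ->]; destruct Hk as [-> | ->]; field. }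
  assert (N3 : norm (vsub B p2) = sqrt (10/9)).
  { unfold norm. f_equal. rewrite (dot_tri i j k _ _ Ht), !coord_vsub, P2i, P2j, P2k, <- E1, E2, E3.
    rw Eb Ej Ek. unfold d. destruct Hbb as [-> | ->]; destruct Hk as [-> | ->]; field. }
  assert (Cp1 : in_cube p1).
  { apply (cube_tri i j k); [exact Ht| rewrite P1i | rewrite P1j | rewrite P1k]; unfold d;
    destruct Hbb as [-> | ->]; destruct Hj as [-> | ->]; destruct Hk as [-> | ->]; lra. }
  assert (Cp2 : in_cube p2).
  { apply (cube_tri i j k); [exact Ht| rewrite P2i | rewrite P2j | rewrite P2k]; unfold d;
    destruct Hbb as [-> | ->]; destruct Hj as [-> | ->]; destruct Hk as [-> | ->]; lra. }
  assert (CA : in_cube A) by (apply vertex_cube; auto).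
  assert (CB : in_cube B) by (apply vertex_cube; auto).
  assert (Hs10 : 0 < sqrt (10/9)) by (apply sqrt_lt_R0; lra).
  exists 3%nat, q. split; [|split].
  - split; [lia|]. split; [reflexivity|]. split; [reflexivity|]. split; [|split; [|split]].
    + intros m Hm. destruct m as [|[|[|m]]]; [| | |lia]; simpl.
      * split. intros E. assert (coord A i = coord p1 i) by (rewrite E; auto).
        rewrite P1i in H. rwh Eb Ej Ek H. destruct Hbb as [Hx|Hx]; rewrite Hx in H; lra.
        exists j, aj. split; [split; auto|]. split; split; auto.
      * split. intros E. assert (coord p1 j = coord p2 j) by (rewrite E; auto).
        rewrite P1j, P2j in H. destruct Hj as [Hx|Hx];  rewrite Hx in H; lra.
        exists i, (1 - b). split; [split; auto; destruct Hbb as [-> | ->]; unfold bit; lra|].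
        split; split; auto.
      * split. intros E. assert (coord p2 i = coord B i) by (rewrite E; auto).
        rewrite P2i, <- E1 in H. rwh Eb Ej Ek H. destruct Hbb as [Hx|Hx]; rewrite Hx in H; lra.
        exists j, (1 - aj). split; [split; auto; destruct Hj as [-> | ->]; unfold bit; lra|].
        split; split; auto.
    + intros m Hm Hv. destruct m as [|[|[|m]]]; try lia; simpl in Hv.
      * destruct (Hv k Hk') as [Hc|Hc]; rewrite P1k in Hc; unfold d in Hc;
        destruct Hk as [Hx|Hx];  rewrite Hx in Hc; lra.
      * destruct (Hv k Hk') as [Hc|Hc]; rewrite P2k in Hc; unfold d in Hc;
        destruct Hk as [Hx|Hx];  rewrite Hx in Hc; lra.
    + intros m t Hm Htt Hv. destruct m as [|[|[|m]]]; try lia; simpl in Hv;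
      destruct (Hv k Hk') as [Hc|Hc]; rewrite coord_vadd, coord_vscale, coord_vsub in Hc;
      try rewrite P1k in Hc; try rewrite P2k in Hc; try rewrite E3 in Hc; rwh Eb Ej Ek Hc; unfold d in Hc;
      destruct Hk as [Hx|Hx];  rewrite Hx in Hc; lra.
    + intros m Hm. destruct m as [|[|[|m]]]; try lia; simpl.
      * exists j, aj, i, (1 - b).
        split; [split; auto|]. split; [split; auto; destruct Hbb as [-> | ->]; unfold bit; lra|].
        split; [split; auto|]. split; [split; auto|]. split; [split; auto|]. split; [split; auto|].
        right. split; [auto|]. intros m0 Hm0 Hm1 Hm2.
        destruct (tri_cover i j k m0 Ht Hm0) as [->|[->| ->]]; try congruence.
        rewrite N1, N2, !coord_vsub, P1k, P2k. rw Eb Ej Ek. field; lra.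
      * exists i, (1 - b), j, (1 - aj).
        split; [split; auto; destruct Hbb as [-> | ->]; unfold bit; lra|].
        split; [split; auto; destruct Hj as [-> | ->]; unfold bit; lra|].
        split; [split; auto|]. split; [split; auto|]. split; [split; auto|].
        split; [split; auto; rewrite E2; auto|].
        right. split; [auto|]. intros m0 Hm0 Hm1 Hm2.
        destruct (tri_cover i j k m0 Ht Hm0) as [->|[->| ->]]; try congruence.
        rewrite N2, N3, !coord_vsub, P1k, P2k, E3. rw Eb Ej Ek. unfold d. field; lra.
  - exists 1%nat. split; [lia|]. simpl. intros (t & Ht01 & E).
    assert (coord p1 i = coord (vadd A (vscale t (vsub B A))) i) by (rewrite <- E; auto).
    rewrite coord_vadd, coord_vscale, coord_vsub, P1i, <- E1 in H. rwh Eb Ej Ek H.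
    destruct Hbb as [Hx|Hx]; rewrite Hx in H; lra.
  - simpl. unfold pdist. rewrite N1, N2, N3, <- sqrt10_eq. ring.
Qed.


Theorem lemma5p4 (A B : pt) :
  opposite_on_face A B ->
  (* the face diagonal is a geodesic trajectory of length sqrt 2 *)
  (geodesic_traj A B 1 (fun k => match k with O => A | _ => B end) /\
   pdist A B = sqrt 2) /\
  (* and it is the shortest one *)
  (forall n p, geodesic_traj A B n p -> sqrt 2 <= path_len p n) /\
  (* among all other geodesic trajectories the minimal length is sqrt 10 *)
  (exists n p, geodesic_traj A B n p /\ leaves_segment A B n p /\
     path_len p n = sqrt 10) /\
  (forall n p, geodesic_traj A B n p -> leaves_segment A B n p ->
     sqrt 10 <= path_len p n).
Proof.
  intros Ho. split; [split; [apply diag_geo; auto | apply opp_dist; auto]|].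
  split.
  - intros n p Hg. rewrite <- (opp_dist A B Ho).
    pose proof Hg as [Hn [H0 [Hnn _]]].
    pose proof (chain p 0 n ltac:(lia)) as C. rewrite H0, Hnn in C.
    change (path_len p 0) with 0 in C. lra.
  - split; [apply ex10; auto|]. intros n p Hg Hl. apply (main4 A B n p Ho Hg Hl).
Qed.
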